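(* Let $E$ be a closed term with $\vdash E:(\neg X\to X)\to X$, where $X$ is a propositional variable. Then for each term $u$, each finite sequence of terms $\bar w$ and each sequence of terms $(v_i)_{i\in\mathbb N^*}$, there exist $m\in\mathbb N$ and terms $\theta_1,\dots,\theta_m$ such that: $(E\;u)\;\bar w\triangleright^*\underline{\mu}.((u\;\theta_1)\;\bar w)$; $(\theta_i\;v_i)\triangleright^*\underline{\mu}.((u\;\theta_{i+1})\;\bar w)$ for all $1\le i\le m-1$; and $(\theta_m\;v_m)\triangleright^*\underline{\mu}.(v_i\;\bar w)$ for some $1\le i\le m$.
   Context: $\lambda\mu$-terms: $t::= x\mid \lambda x.t\mid (t\;t)\mid \mu a.t\mid (a\;t)$ over disjoint infinite sets of $\lambda$-variables and $\mu$-variables; types built from propositional variables and $\perp$ with $\to$; $\neg A$ denotes $A\to\perp$. Reduction $(\lambda x.u\;v)\triangleright u[x:=v]$, $(\mu a.u\;v)\triangleright\mu a.u[a:=^*v]$ ($u[a:=^*v]$ replaces each subterm $(a\;w)$ of $u$ by $(a\;(w\;v))$), $\triangleright^*$ its reflexive transitive compatible closure. Typing rules: (ax) $\Gamma\vdash x:A;\Delta$ if $x:A\in\Gamma$; ($\to_i$) from $\Gamma,x:A\vdash t:B;\Delta$ infer $\Gamma\vdash\lambda x.t:A\to B;\Delta$; ($\to_e$) from $\Gamma\vdash u:A\to B;\Delta$, $\Gamma\vdash v:A;\Delta$ infer $\Gamma\vdash(u\;v):B;\Delta$; ($\mu$) from $\Gamma\vdash t:\perp;\Delta,a:A$ infer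 $\Gamma\vdash\mu a.t:A;\Delta$; ($\perp$) from $\Gamma\vdash t:A;\Delta,a:A$ infer $\Gamma\vdash(a\;t):\perp;\Delta,a:A$; $\vdash$ means empty contexts. For a sequence $\bar w=w_1\dots w_n$, $t\;\bar w=((t\;w_1)\dots w_n)$. For a term $t$, $M_t$ is the smallest set containing $t$ such that $s\in M_t$ and $a$ a $\mu$-variable imply $\mu a.s\in M_t$ and $(a\;s)\in M_t$; $\underline{\mu}.t$ denotes an arbitrary element of $M_t$ (different occurrences may denote different elements). *)

(* Defs.v *)
(* Lambda-mu calculus with de Bruijn indices, two separate
   index spaces: lambda-variables (Var x) and mu-variables (MApp a t). *)
From Stdlib Require Import Arith List.
Import ListNotations.

Inductive term : Type :=
| Var  : nat -> term
| Lam  : term -> term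
| App  : term -> term -> term
| Mu   : term -> term
| MApp : nat -> term -> term.

Definition upren (f : nat -> nat) : nat -> nat :=
  fun n => match n with 0 => 0 | S k => S (f k) end.

Fixpoint lren (f : nat -> nat) (t : term) : term :=
  match t with
  | Var x => Var (f x)
  | Lam t => Lam (lren (upren f) t)
  | App t1 t2 => App (lren f t1) (lren f t2)
  | Mu t => Mu (lren f t)
  | MApp a t => MApp a (lren f t)
  end.

Fixpoint mren (f : nat -> nat) (t : term) : term :=
  match t with
  | Var x => Var x
  | Lam t => Lam (mren f t)
  | App t1 t2 => App (mren f t1) (mren f t2)
  | Mu t => Mu (mren (upren f) t)
  | MApp a t => MApp (f a) (mren f t)
  end.

Definition upsub (s : nat -> term) : nat -> term :=
  fun n => match n with 0 => Var 0 | S k => lren S (s k) end.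

Fixpoint lsubst (s : nat -> term) (t : term) : term :=
  match t with
  | Var x => s x
  | Lam t => Lam (lsubst (upsub s) t)
  | App t1 t2 => App (lsubst s t1) (lsubst s t2)
  | Mu t => Mu (lsubst (fun n => mren S (s n)) t)
  | MApp a t => MApp a (lsubst s t)
  end.

Definition subst0 (u v : term) : term :=
  lsubst (fun n => match n with 0 => v | S k => Var k end) u.

(* structural substitution u[a :=* v]: each subterm (a w) becomes (a (w v)) *)
Fixpoint ssub (k : nat) (v : term) (t : term) : term :=
  match t with
  | Var x => Var x
  | Lam t => Lam (ssub k (lren S v) t)
  | App t1 t2 => App (ssub k v t1) (ssub k v t2)
  | Mu t => Mu (ssub (S k) (mren S v) t)
  | MApp a t =>
      if Nat.eqb a k then MApp a (App (ssub k v t) v)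
      else MApp a (ssub k v t)
  end.

Inductive step : term -> term -> Prop :=
| st_beta : forall u v, step (App (Lam u) v) (subst0 u v)
| st_mu : forall u v, step (App (Mu u) v) (Mu (ssub 0 (mren S v) u))
| st_lam : forall t t', step t t' -> step (Lam t) (Lam t')
| st_appl : forall t t' s, step t t' -> step (App t s) (App t' s)
| st_appr : forall t s s', step s s' -> step (App t s) (App t s')
| st_mu_c : forall t t', step t t' -> step (Mu t) (Mu t')
| st_mapp : forall a t t', step t t' -> step (MApp a t) (MApp a t').

Inductive red : term -> term -> Prop :=
| red_refl : forall t, red t t
| red_step : forall t1 t2 t3, step t1 t2 -> red t2 t3 -> red t1 t3.

Inductive ty : Type :=
| TVar : nat -> ty
| Bot  : ty
| Arr  : ty -> ty -> ty.

Definition neg (A : ty) : ty := Arr A Bot.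

(* Gamma |- t : A ; Delta   (contexts indexed by de Bruijn indices) *)
Inductive typ : list ty -> list ty -> term -> ty -> Prop :=
| ty_ax : forall G D x A, nth_error G x = Some A -> typ G D (Var x) A
| ty_lam : forall G D t A B, typ (A :: G) D t B -> typ G D (Lam t) (Arr A B)
| ty_app : forall G D u v A B,
    typ G D u (Arr A B) -> typ G D v A -> typ G D (App u v) B
| ty_mu : forall G D t A, typ G (A :: D) t Bot -> typ G D (Mu t) A
| ty_bot : forall G D a t A,
    nth_error D a = Some A -> typ G D t A -> typ G D (MApp a t) Bot.

Definition apps (t : term) (ws : list term) : term := fold_left App ws t.

(* Binding the free mu-variable a by a new mu-binder: de Bruijn rendering of
   the named "mu a. s": a |-> 0, j |-> j+1 for j < a, j |-> j for j > a. *)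
Definition bindm (a : nat) : nat -> nat :=
  fun j => if Nat.eqb j a then 0 else if Nat.ltb j a then S j else j.

Inductive inM (t : term) : term -> Prop :=
| inM_base : inM t t
| inM_mu : forall a s, inM t s -> inM t (Mu (mren (bindm a) s))
| inM_app : forall a s, inM t s -> inM t (MApp a s).

(* s |>* mu.t, i.e. s reduces to some element of M_t *)
Definition redM (s t : term) : Prop := exists s', red s s' /\ inM t s'.

(* Main.v *)
Require Import Defs.
From Stdlib Require Import Arith List Lia FunctionalExtensionality.
Import ListNotations.

Lemma mren_comp : forall t f g, mren f (mren g t) = mren (fun x => f (g x)) t.
Proof.
  induction t; intros f g; simpl; f_equal; auto.
  rewrite IHt. f_equal. apply functional_extensionality; intros [|x]; reflexivity.
Qed.

Lemma mren_id : forall t, mren (fun x => x) t = t.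
Proof.
  induction t; simpl; f_equal; auto.
  rewrite <- IHt at 2. f_equal. apply functional_extensionality; intros [|x]; reflexivity.
Qed.

Lemma lren_comp : forall t f g, lren f (lren g t) = lren (fun x => f (g x)) t.
Proof.
  induction t; intros f g; simpl; f_equal; auto.
  rewrite IHt. f_equal. apply functional_extensionality; intros [|x]; reflexivity.
Qed.

Lemma lren_mren : forall t f g, lren f (mren g t) = mren g (lren f t).
Proof. induction t; intros f g; simpl; f_equal; auto. Qed.

Lemma lsubst_lren : forall t tau g, lsubst tau (lren g t) = lsubst (fun x => tau (g x)) t.
Proof.
  induction t; intros tau g; simpl; f_equal; auto.
  - rewrite IHt. f_equal. apply functional_extensionality; intros [|x]; reflexivity.
  - rewrite IHt. reflexivity.
Qed.

Lemma lren_lsubst : forall t tau g, lren g (lsubst tau t) = lsubst (fun x => lren g (tau x)) t.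
Proof.
  induction t; intros tau g; simpl; f_equal; auto.
  - rewrite IHt. f_equal. apply functional_extensionality; intros [|x]; simpl; auto.
    rewrite !lren_comp. reflexivity.
  - rewrite IHt. f_equal. apply functional_extensionality; intros x. apply lren_mren.
Qed.

Lemma mren_lsubst : forall t tau h, mren h (lsubst tau t) = lsubst (fun x => mren h (tau x)) (mren h t).
Proof.
  induction t; intros tau h; simpl; f_equal; auto.
  - rewrite IHt. f_equal. apply functional_extensionality; intros [|x]; simpl; auto.
    rewrite lren_mren. reflexivity.
  - rewrite IHt. f_equal. apply functional_extensionality; intros x. rewrite !mren_comp. reflexivity.
Qed.

Lemma lsubst_id : forall t, lsubst Var t = t.
Proof.
  induction t; simpl; f_equal; auto.
  - rewrite <- IHt at 2. f_equal. apply functional_extensionality; intros [|x]; reflexivity.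
Qed.

Definition inj (h : nat -> nat) := forall x y, h x = h y -> x = y.

Lemma upren_inj : forall h, inj h -> inj (upren h).
Proof. intros h H [|x] [|y]; simpl; intro E; try discriminate; auto. all: injection E; intro HE; f_equal; apply H; exact HE. Qed.

Lemma mren_subst0 : forall u v h, mren h (subst0 u v) = subst0 (mren h u) (mren h v).
Proof.
  intros. unfold subst0. rewrite mren_lsubst. f_equal.
  apply functional_extensionality; intros [|x]; reflexivity.
Qed.

Lemma mren_ssub : forall t k v h, inj h -> mren h (ssub k v t) = ssub (h k) (mren h v) (mren h t).
Proof.
  induction t; intros k w h Hh; simpl; try (f_equal; auto; fail).
  - f_equal. rewrite IHt; auto. f_equal. symmetry; apply lren_mren.
  - f_equal. rewrite IHt by (apply upren_inj; auto). simpl. f_equal.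
    rewrite !mren_comp. reflexivity.
  - destruct (Nat.eqb_spec n k) as [->|Hn].
    + rewrite Nat.eqb_refl. simpl. f_equal. f_equal; auto.
    + destruct (Nat.eqb_spec (h n) (h k)) as [E|_].
      * exfalso; apply Hn; apply Hh; auto.
      * simpl; f_equal; auto.
Qed.

Lemma step_mren : forall s s', step s s' -> forall h, inj h -> step (mren h s) (mren h s').
Proof.
  induction 1; intros h Hh; simpl.
  - rewrite mren_subst0. constructor.
  - rewrite mren_ssub by (apply upren_inj; auto). simpl.
    rewrite !mren_comp. simpl. replace (mren (fun x => S (h x)) v) with (mren S (mren h v)) by (rewrite mren_comp; reflexivity). apply st_mu.
  - constructor; auto.
  - constructor; auto.
  - constructor; auto.
  - constructor; apply IHstep; apply upren_inj; auto.
  - constructor; auto.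
Qed.

Lemma red_mren : forall s s', red s s' -> forall h, inj h -> red (mren h s) (mren h s').
Proof. induction 1; intros; [constructor|]. econstructor; [apply step_mren; eauto| auto]. Qed.

Lemma red_trans : forall a b c, red a b -> red b c -> red a c.
Proof. induction 1; intros; auto. econstructor; eauto. Qed.

Lemma red_cong : forall (F : term -> term), (forall a b, step a b -> step (F a) (F b)) ->
  forall a b, red a b -> red (F a) (F b).
Proof. intros F HF; induction 1; [constructor|econstructor; eauto]. Qed.

Lemma step_apps : forall l a b, step a b -> step (apps a l) (apps b l).
Proof. induction l; intros; simpl; auto. apply IHl. constructor; auto. Qed.

Lemma apps_app : forall l1 l2 t, apps t (l1 ++ l2) = apps (apps t l1) l2.
Proof. intros; unfold apps; apply fold_left_app. Qed.

Lemma mren_apps : forall l t h, mren h (apps t l) = apps (mren h t) (map (mren h) l).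
Proof. induction l; intros; simpl; [reflexivity|]. rewrite IHl. reflexivity. Qed.
Lemma ssub_apps : forall l t k w, ssub k w (apps t l) = apps (ssub k w t) (map (ssub k w) l).
Proof. induction l; intros; simpl; [reflexivity|]. rewrite IHl. reflexivity. Qed.
Lemma lsubst_apps : forall l t s, lsubst s (apps t l) = apps (lsubst s t) (map (lsubst s) l).
Proof. induction l; intros; simpl; [reflexivity|]. rewrite IHl. reflexivity. Qed.

Definition mcons (l : list term) (r : nat -> list term) : nat -> list term :=
  fun a => match a with 0 => l | S a => r a end.

Fixpoint sub (sg : nat -> term) (z : nat -> nat) (r : nat -> list term) (t : term) : term :=
 match t with
 | Var x => sg x
 | Lam t => Lam (sub (upsub sg) z (fun a => map (lren S) (r a)) t)
 | App a b => App (sub sg z r a) (sub sg z r b)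
 | Mu t => Mu (sub (fun x => mren S (sg x)) (upren z) (mcons [] (fun a => map (mren S) (r a))) t)
 | MApp a t => MApp (z a) (apps (sub sg z r t) (r a))
 end.

Lemma sub_id : forall t, sub Var (fun x => x) (fun _ => []) t = t.
Proof.
  induction t; simpl; f_equal; auto.
  - rewrite <- IHt at 2. f_equal. apply functional_extensionality; intros [|x]; reflexivity.
  - rewrite <- IHt at 2. f_equal.
    + apply functional_extensionality; intros [|x]; reflexivity.
    + apply functional_extensionality; intros [|x]; reflexivity.
Qed.

Lemma lsubst_sub : forall t tau sg z r,
  lsubst tau (sub sg z r t) = sub (fun x => lsubst tau (sg x)) z (fun a => map (lsubst tau) (r a)) t.
Proof.
  induction t; intros tau sg z r; simpl; f_equal; auto.
  - rewrite IHt. f_equal.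
    + apply functional_extensionality; intros [|x]; simpl; auto.
      rewrite lsubst_lren, lren_lsubst. reflexivity.
    + apply functional_extensionality; intros a. rewrite !map_map. apply map_ext; intro y.
      rewrite lsubst_lren, lren_lsubst. reflexivity.
  - rewrite IHt. f_equal.
    + apply functional_extensionality; intros x. rewrite mren_lsubst. reflexivity.
    + apply functional_extensionality; intros [|a]; simpl; auto.
      rewrite !map_map. apply map_ext; intro y. rewrite mren_lsubst. reflexivity.
  - rewrite lsubst_apps, IHt. reflexivity.
Qed.

Lemma mren_sub : forall t h sg z r,
  mren h (sub sg z r t) = sub (fun x => mren h (sg x)) (fun a => h (z a)) (fun a => map (mren h) (r a)) t.
Proof.
  induction t; intros h sg z r; simpl; f_equal; auto.
  - rewrite IHt. f_equal.
    + apply functional_extensionality; intros [|x]; simpl; auto.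
      rewrite lren_mren. reflexivity.
    + apply functional_extensionality; intros a. rewrite !map_map. apply map_ext; intro y.
      rewrite lren_mren. reflexivity.
  - rewrite IHt. f_equal.
    + apply functional_extensionality; intros x. rewrite !mren_comp. reflexivity.
    + apply functional_extensionality; intros [|a]; reflexivity.
    + apply functional_extensionality; intros [|a]; simpl; auto.
      rewrite !map_map. apply map_ext; intro y. rewrite !mren_comp. reflexivity.
  - rewrite mren_apps, IHt. reflexivity.
Qed.

Fixpoint noocc (k : nat) (t : term) : Prop :=
  match t with
  | Var _ => True
  | Lam t => noocc k t
  | App a b => noocc k a /\ noocc k b
  | Mu t => noocc (S k) t
  | MApp a t => a <> k /\ noocc k t
  end.

Lemma ssub_noocc : forall t k w, noocc k t -> ssub k w t = t.
Proof.
  induction t; intros k w H; simpl in *; try (f_equal; intuition auto; fail).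
  destruct H as [H1 H2]. destruct (Nat.eqb_spec n k); [contradiction|]. f_equal; auto.
Qed.

Lemma noocc_lren : forall t k g, noocc k t -> noocc k (lren g t).
Proof. induction t; intros k g H; simpl in *; intuition auto. Qed.

Lemma noocc_mren_avoid : forall t k h, (forall x, h x <> k) -> noocc k (mren h t).
Proof.
  induction t; intros k h H; simpl; auto.
  - apply IHt. intros [|x]; simpl; [discriminate|]. specialize (H x). congruence.
Qed.

Lemma noocc_mren_inj : forall t k h, inj h -> noocc k t -> noocc (h k) (mren h t).
Proof.
  induction t; intros k h Hh H; simpl in *; try (intuition auto; fail).
  all: try (apply (IHt (S k) (upren h)); auto; apply upren_inj; auto).
  all: try (destruct H as [H1 H2]; split; auto; intro E; apply H1; apply Hh; auto).
Qed.

Definition upd (r : nat -> list term) (c : nat) (w : term) : nat -> list term :=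
  fun a => if Nat.eqb a c then r a ++ [w] else r a.

Lemma ssub_sub : forall t k c w sg z r,
  z c = k -> (forall a, z a = k -> a = c) ->
  (forall x, noocc k (sg x)) -> (forall a y, In y (r a) -> noocc k y) ->
  ssub k w (sub sg z r t) = sub sg z (upd r c w) t.
Proof.
  induction t; intros k c w sg z r Hc Hu Hs Hr; simpl.
  - apply ssub_noocc; auto.
  - f_equal. rewrite IHt with (c := c); auto.
    + f_equal. apply functional_extensionality; intro a. unfold upd.
      destruct (Nat.eqb a c); auto. rewrite map_app. reflexivity.
    + intros [|x]; simpl; auto. apply noocc_lren; auto.
    + intros a y Hy. apply in_map_iff in Hy. destruct Hy as [y' [<- Hy']].
      apply noocc_lren; eauto.
  - f_equal; eauto.
  - f_equal. rewrite IHt with (c := S c); auto.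
    + f_equal. apply functional_extensionality; intros [|a]; unfold upd, mcons; simpl; auto.
      destruct (Nat.eqb a c); auto. rewrite map_app. reflexivity.
    + simpl. congruence.
    + intros [|a]; simpl; try discriminate. intro E; injection E; intro; f_equal; auto.
    + intros x. apply (noocc_mren_inj _ _ S); auto. intros p q E; injection E; auto.
    + intros [|a] y Hy; simpl in Hy; [contradiction|].
      apply in_map_iff in Hy. destruct Hy as [y' [<- Hy']].
      apply (noocc_mren_inj _ _ S); eauto. intros p q E; injection E; auto.
  - rewrite ssub_apps. rewrite (IHt k c); auto.
    rewrite (map_ext_in _ (fun x => x)) by (intros y Hy; apply ssub_noocc; eauto).
    rewrite map_id.
    destruct (Nat.eqb_spec (z n) k) as [E|E].
    + pose proof (Hu _ E) as ->. unfold upd. rewrite Nat.eqb_refl. rewrite apps_app. reflexivity.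
    + destruct (Nat.eqb_spec n c) as [->|Hnc]; [congruence|]. unfold upd. rewrite (proj2 (Nat.eqb_neq _ _) Hnc). reflexivity.
Qed.

Section Sem.
Variable u : term.
Variable ws : list term.
Variable v : nat -> term.

Inductive Cl : nat -> (nat -> nat) -> term -> Prop :=
| cl_v : forall k f i, 1 <= i <= k -> Cl k f (apps (mren f (v i)) (map (mren f) ws))
| cl_u : forall k f th s', red (App th (mren f (v (S k)))) s' -> Cl (S k) f s' ->
    Cl k f (apps (App (mren f u) th) (map (mren f) ws))
| cl_app : forall k f a s, Cl k f s -> Cl k f (MApp a s)
| cl_mu : forall k f s, Cl k (fun x => S (f x)) s -> Cl k f (Mu s).

Definition Good k f t := exists t', red t t' /\ Cl k f t'.

Lemma Cl_mren : forall k f s, Cl k f s -> forall h, inj h -> Cl k (fun x => h (f x)) (mren h s).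
Proof.
  induction 1; intros h Hh.
  - rewrite mren_apps, map_map, mren_comp.
    rewrite (map_ext _ (mren (fun x => h (f x)))) by (intro; apply mren_comp).
    constructor; auto.
  - rewrite mren_apps, map_map. simpl. rewrite mren_comp.
    rewrite (map_ext _ (mren (fun x => h (f x)))) by (intro; apply mren_comp).
    apply cl_u with (s' := mren h s'); auto.
    replace (mren (fun x => h (f x)) (v (S k))) with (mren h (mren f (v (S k)))) by apply mren_comp.
    apply (red_mren (App th (mren f (v (S k))))); auto.
  - simpl. constructor; auto.
  - simpl. constructor. apply (IHCl (upren h)). apply upren_inj; auto.
Qed.

Lemma Good_mren : forall k f s h, inj h -> Good k f s -> Good k (fun x => h (f x)) (mren h s).
Proof.
  intros k f s h Hh [s' [R C]]. exists (mren h s'). split.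
  - apply red_mren; auto.
  - apply Cl_mren; auto.
Qed.

Lemma Good_red : forall k f s s', red s s' -> Good k f s' -> Good k f s.
Proof. intros k f s s' R [t [R2 C]]. exists t; split; auto. eapply red_trans; eauto. Qed.

Lemma Good_mapp : forall k f a s, Good k f s -> Good k f (MApp a s).
Proof.
  intros k f a s [t [R C]]. exists (MApp a t). split.
  - apply (red_cong (MApp a)); auto. intros; constructor; auto.
  - constructor; auto.
Qed.

Lemma Good_mu : forall k f s, Good k (fun x => S (f x)) s -> Good k f (Mu s).
Proof.
  intros k f s [t [R C]]. exists (Mu t). split.
  - apply (red_cong Mu); auto. intros; constructor; auto.
  - constructor; auto.
Qed.

Fixpoint Sk (A : ty) (k : nat) (f : nat -> nat) (pi : list term) : Prop :=
  match A with
  | TVar _ => pi = map (mren f) ws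
  | Bot => pi = []
  | Arr A B => exists s pi', pi = s :: pi' /\
      (forall j h pi0, k <= j -> inj h -> Sk A j (fun x => h (f x)) pi0 ->
         Good j (fun x => h (f x)) (apps (mren h s) pi0))
      /\ Sk B k f pi'
  end.

Definition Rk A k f s := forall j h pi0, k <= j -> inj h -> Sk A j (fun x => h (f x)) pi0 ->
         Good j (fun x => h (f x)) (apps (mren h s) pi0).

Lemma inj_comp : forall g h, inj g -> inj h -> inj (fun x => g (h x)).
Proof. intros g h Hg Hh x y E. apply Hh, Hg, E. Qed.

Lemma Rk_mono : forall A k f s j h, k <= j -> inj h -> Rk A k f s -> Rk A j (fun x => h (f x)) (mren h s).
Proof.
  intros A k f s j h Hkj Hh HR j' h' pi0 Hj Hh' HS.
  rewrite mren_comp. apply (HR j' (fun x => h' (h x))); auto.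
  - lia.
  - apply inj_comp; auto.
Qed.

Lemma Sk_mono : forall A k f pi j h, k <= j -> inj h -> Sk A k f pi -> Sk A j (fun x => h (f x)) (map (mren h) pi).
Proof.
  induction A; intros k f pi j h Hkj Hh HS; simpl in *.
  - subst. rewrite map_map. apply map_ext. intro; apply mren_comp.
  - subst; reflexivity.
  - destruct HS as [s [pi' [-> [HR HB]]]]. exists (mren h s), (map (mren h) pi'). split; [reflexivity|].
    split.
    + apply (Rk_mono A1 k f s j h); auto.
    + eapply IHA2; eauto.
Qed.

Lemma Rk_id : forall A k f s pi, Rk A k f s -> Sk A k f pi -> Good k f (apps s pi).
Proof.
  intros A k f s pi HR HS. rewrite <- (mren_id s). apply (HR k (fun x => x)); auto.
  intros x y E; exact E.
Qed.

Lemma mu_chain : forall t pi sg z l r,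
  (forall x, noocc 0 (sg x)) -> (forall a y, In y (r a) -> noocc 0 y) ->
  (forall y, In y l -> noocc 0 y) -> z 0 = 0 -> (forall a, z a = 0 -> a = 0) ->
  red (apps (Mu (sub sg z (mcons l r) t)) pi) (Mu (sub sg z (mcons (l ++ map (mren S) pi) r) t)).
Proof.
  intros t pi; induction pi as [|w pi IH]; intros sg z l r Hs Hr Hl Hz Hu; simpl.
  - rewrite app_nil_r. constructor.
  - econstructor.
    + apply step_apps. apply st_mu.
    + rewrite (ssub_sub t 0 0); auto.
      * replace (upd (mcons l r) 0 (mren S w)) with (mcons (l ++ [mren S w]) r).
        -- replace (l ++ mren S w :: map (mren S) pi) with ((l ++ [mren S w]) ++ map (mren S) pi)
             by (rewrite <- app_assoc; reflexivity).
           apply IH; auto.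
           intros y Hy. apply in_app_or in Hy. destruct Hy as [Hy|[<-|[]]]; auto.
              apply noocc_mren_avoid. intros; discriminate.
        -- apply functional_extensionality; intros [|a]; reflexivity.
      * intros [|a] y Hy; simpl in Hy; eauto.
Qed.

Lemma adeq : forall G D t A, typ G D t A -> forall k f sg z r,
  (forall x B, nth_error G x = Some B -> Rk B k f (sg x)) ->
  (forall a B, nth_error D a = Some B -> Sk B k f (r a)) ->
  forall pi, Sk A k f pi -> Good k f (apps (sub sg z r t) pi).
Proof.
  induction 1; intros k f sg z r HG HD pi HS; simpl.
  - apply Rk_id with A; auto.
  - simpl in HS. destruct HS as [s [pi' [-> [HR HB]]]]. simpl.
    eapply Good_red.
    + apply red_step with (t2 := apps (subst0 (sub (upsub sg) z (fun a => map (lren S) (r a)) t) s) pi').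
      * apply step_apps. apply st_beta.
      * constructor.
    + unfold subst0. rewrite lsubst_sub.
      apply IHtyp.
      * intros [|x] B' Hx; simpl in Hx.
        -- injection Hx as <-. simpl. exact HR.
        -- simpl. rewrite lsubst_lren. simpl. rewrite lsubst_id. apply HG; auto.
      * intros a B' Ha. rewrite map_map.
        rewrite (map_ext _ (fun x => x)) by (intro y; rewrite lsubst_lren; apply lsubst_id).
        rewrite map_id. apply HD; auto.
      * exact HB.
  -
    change (Good k f (apps (sub sg z r u0) (sub sg z r v0 :: pi))).
    apply IHtyp1; auto. simpl. eexists; eexists; split; [reflexivity|]. split; auto.
    intros j h pi0 Hj Hh HS0.
    rewrite mren_sub. apply IHtyp2; auto.
    + intros x B' Hx. apply Rk_mono with (k := k); auto.
    + intros a B' Ha. apply Sk_mono with (k := k); auto.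
  -
    eapply Good_red; [apply mu_chain|].
    + intros x. apply noocc_mren_avoid. intros; discriminate.
    + intros a y Hy. apply in_map_iff in Hy. destruct Hy as [y' [<- _]].
      apply noocc_mren_avoid. intros; discriminate.
    + intros y [].
    + reflexivity.
    + intros [|a]; simpl; auto; discriminate.
    + simpl. apply Good_mu.
      change (Good k (fun x => S (f x)) (apps (sub (fun x => mren S (sg x)) (upren z)
         (mcons (map (mren S) pi) (fun a => map (mren S) (r a))) t) [])).
      apply IHtyp; auto.
      * intros x B' Hx. apply Rk_mono with (k := k); auto. intros p q E; injection E; auto.
      * intros [|a] B' Ha; simpl in Ha.
        -- injection Ha as <-. apply Sk_mono with (k := k); auto. intros p q E; injection E; auto.
        -- apply Sk_mono with (k := k); auto. intros p q E; injection E; auto.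
      * reflexivity.
  -
    simpl in HS. subst. simpl. apply Good_mapp. apply IHtyp; auto.
Qed.
End Sem.

Fixpoint mb (t : term) : nat :=
  match t with
  | Var _ => 0
  | Lam t => mb t
  | App a b => max (mb a) (mb b)
  | Mu t => mb t - 1
  | MApp a t => max (S a) (mb t)
  end.

Lemma mren_bound : forall t f, (forall x, x < mb t -> f x = x) -> mren f t = t.
Proof.
  induction t; intros f H; simpl; cbn [mb] in H.
  - reflexivity.
  - f_equal; auto.
  - f_equal; [apply IHt1|apply IHt2]; intros; apply H; lia.
  - f_equal. apply IHt. intros [|x] Hx; simpl; auto. f_equal. apply H. lia.
  - f_equal; [apply H; lia|]. apply IHt; intros; apply H; lia.
Qed.

Definition binv (a : nat) (y : nat) : nat :=
  match y with 0 => a | S j => if j <? a then j else S j end.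

Lemma bindm_binv : forall a y, bindm a (binv a y) = y.
Proof.
  intros a [|j]; unfold bindm, binv.
  - rewrite Nat.eqb_refl; auto.
  - destruct (Nat.ltb_spec j a).
    + destruct (Nat.eqb_spec j a); [lia|]. destruct (Nat.ltb_spec j a); [auto|lia].
    + destruct (Nat.eqb_spec (S j) a); [lia|]. destruct (Nat.ltb_spec (S j) a); [lia|auto].
Qed.

Lemma binv_bindm : forall a x, binv a (bindm a x) = x.
Proof.
  intros a x; unfold bindm, binv.
  destruct (Nat.eqb_spec x a); [auto|].
  destruct (Nat.ltb_spec x a).
  - destruct (Nat.ltb_spec x a); [auto|lia].
  - destruct x as [|x]; [lia|]. destruct (Nat.ltb_spec x a); [lia|auto].
Qed.

Lemma inj_bindm : forall a, inj (bindm a).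
Proof. intros a x y E. rewrite <- (binv_bindm a x), <- (binv_bindm a y), E. reflexivity. Qed.
Lemma inj_binv : forall a, inj (binv a).
Proof. intros a x y E. rewrite <- (bindm_binv a x), <- (bindm_binv a y), E. reflexivity. Qed.

Section Ext.
Variable u : term.
Variable ws : list term.
Variable v : nat -> term.

Fixpoint mbl (l : list term) : nat := match l with [] => 0 | w :: l => mb w + mbl l end.
Fixpoint sumv (M : nat) : nat := match M with 0 => mb (v 0) | S M => mb (v (S M)) + sumv M end.
Definition bnd M := mb u + mbl ws + sumv M.

Lemma sumv_le : forall M i, i <= M -> mb (v i) <= sumv M.
Proof.
  induction M; intros i Hi; simpl.
  - assert (i = 0) by lia; subst; lia.
  - destruct (Nat.eq_dec i (S M)); [subst; lia|]. specialize (IHM i ltac:(lia)). lia.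
Qed.

Lemma sumv_mono : forall M N, M <= N -> sumv M <= sumv N.
Proof. intros M N H; induction H; simpl; lia. Qed.

Lemma mbl_in : forall l w, In w l -> mb w <= mbl l.
Proof. induction l; simpl; intros w Hw; [contradiction|]. destruct Hw as [<-|H]; [lia|]. specialize (IHl w H); lia. Qed.

Inductive Ch : nat -> term -> Prop :=
| ch_v : forall k s i, 1 <= i <= k -> redM s (apps (v i) ws) -> Ch k s
| ch_u : forall k s th, redM s (apps (App u th) ws) -> Ch (S k) (App th (v (S k))) -> Ch k s.

Lemma Ch_wrap : forall k X Y, (forall T, redM X T -> redM Y T) -> Ch k X -> Ch k Y.
Proof. intros k X Y H C; inversion C; subst; [eapply ch_v|eapply ch_u]; eauto. Qed.

Lemma Ch_red : forall k X Y, red Y X -> Ch k X -> Ch k Y.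
Proof.
  intros k X Y R. apply Ch_wrap. intros T [s' [R2 I]]. exists s'; split; auto. eapply red_trans; eauto.
Qed.

Lemma fixg : forall M f g t, (forall x, x < bnd M -> g (f x) = x) -> mb t <= bnd M ->
  mren g (mren f t) = t.
Proof. intros. rewrite mren_comp. apply mren_bound. intros; apply H; lia. Qed.

Lemma fixws : forall M f g, (forall x, x < bnd M -> g (f x) = x) ->
  map (mren g) (map (mren f) ws) = ws.
Proof.
  intros. rewrite map_map. rewrite (map_ext_in _ (fun x => x)); [apply map_id|].
  intros w Hw. eapply fixg; eauto. pose proof (mbl_in _ _ Hw). unfold bnd; lia.
Qed.

Lemma extract : forall k f s, Cl u ws v k f s -> exists M, forall g, inj g ->
  (forall x, x < bnd M -> g (f x) = x) -> Ch k (mren g s).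
Proof.
  induction 1.
  - exists i. intros g Hg Hb. rewrite mren_apps. rewrite (fixws i f g Hb).
    rewrite (fixg i f g) by (auto; pose proof (sumv_le i i (le_n _)); unfold bnd; lia).
    apply ch_v with i; auto. exists (apps (v i) ws); split; constructor.
  - destruct IHCl as [M HM]. exists (max (S k) M). intros g Hg Hb.
    rewrite mren_apps, (fixws _ f g Hb). simpl.
    rewrite (fixg (max (S k) M) f g u) by (auto; unfold bnd; lia).
    apply ch_u with (mren g th).
    + exists (apps (App u (mren g th)) ws); split; constructor.
    + apply Ch_red with (mren g s').
      * rewrite <- (fixg (max (S k) M) f g (v (S k))); auto.
        -- apply (red_mren (App th (mren f (v (S k))))); auto.
        -- pose proof (sumv_le (max (S k) M) (S k) ltac:(lia)). unfold bnd; lia.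
      * apply HM; auto. intros x Hx. apply Hb.
        pose proof (sumv_mono M (max (S k) M) ltac:(lia)). unfold bnd in *; lia.
  - destruct IHCl as [M HM]. exists M. intros g Hg Hb. simpl.
    apply Ch_wrap with (mren g s); [|apply HM; auto].
    intros T [s' [R I]]. exists (MApp (g a) s'). split.
    + apply (red_cong (MApp (g a))); auto. intros; constructor; auto.
    + constructor; auto.
  - destruct IHCl as [M HM]. exists M. intros g Hg Hb. simpl.
    set (a := bnd M). set (g' := fun x => binv a (upren g x)).
    assert (E : mren (upren g) s = mren (bindm a) (mren g' s)).
    { rewrite mren_comp. f_equal. apply functional_extensionality; intro x.
      unfold g'. rewrite bindm_binv. reflexivity. }
    rewrite E.
    apply Ch_wrap with (mren g' s).
    + intros T [s' [R I]]. exists (Mu (mren (bindm a) s')). split.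
      * apply (red_cong Mu); [intros; constructor; auto|].
        apply red_mren; auto. apply inj_bindm.
      * constructor; auto.
    + apply HM.
      * unfold g'. apply inj_comp; [apply inj_binv|apply upren_inj; auto].
      * intros x Hx. unfold g'. simpl. rewrite Hb by auto. unfold binv.
        destruct (Nat.ltb_spec x a); [auto|unfold a in *; lia].
Qed.

Lemma final : forall k s, Ch k s ->
  (exists i, 1 <= i <= k /\ redM s (apps (v i) ws)) \/
  exists m th, k < m /\ redM s (apps (App u (th (S k))) ws) /\
    (forall i, S k <= i <= m - 1 -> redM (App (th i) (v i)) (apps (App u (th (i + 1))) ws)) /\
    (exists i, 1 <= i <= m /\ redM (App (th m) (v m)) (apps (v i) ws)).
Proof.
  induction 1.
  - left; eauto.
  - right. destruct IHCh as [[i [Hi R]] | [m [th2 [Hm [R [Hch Hfin]]]]]].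
    + exists (S k), (fun _ => th). split; [lia|]. split; auto. split.
      * intros; lia.
      * exists i; split; [lia|auto].
    + exists m, (fun i => if i =? S k then th else th2 i). split; [lia|].
      rewrite Nat.eqb_refl. split; auto. split.
      * intros i Hi. destruct (Nat.eqb_spec i (S k)) as [->|Hik].
        -- destruct (Nat.eqb_spec (S k + 1) (S k)); [lia|].
           replace (S k + 1) with (S (S k)) by lia. exact R.
        -- destruct (Nat.eqb_spec (i + 1) (S k)); [lia|]. apply Hch; lia.
      * destruct (Nat.eqb_spec m (S k)); [lia|]. exact Hfin.
Qed.
End Ext.

Theorem mainTheorem10 :
  forall (E : term) (X : nat),
    typ nil nil E (Arr (Arr (neg (TVar X)) (TVar X)) (TVar X)) ->
    forall (u : term) (ws : list term) (v : nat -> term),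
    exists (m : nat) (th : nat -> term),
      redM (apps (App E u) ws) (apps (App u (th 1)) ws) /\
      (forall i, 1 <= i <= m - 1 ->
         redM (App (th i) (v i)) (apps (App u (th (i + 1))) ws)) /\
      (exists i, 1 <= i <= m /\ redM (App (th m) (v m)) (apps (v i) ws)).
Proof.
  intros E X HT u ws v.
  assert (HR : Rk u ws v (Arr (Arr (neg (TVar X)) (TVar X)) (TVar X)) 0 (fun x => x) E).
  { intros j h pi0 Hj Hh HS. rewrite <- (sub_id E), mren_sub.
    eapply adeq; eauto.
    - intros [|x] B Hx; discriminate.
    - intros [|a] B Ha; discriminate. }
  assert (HG : Good u ws v 0 (fun x => x) (apps (App E u) ws)).
  { pose proof (HR 0 (fun x => x) (u :: map (mren (fun x => x)) ws) (le_n 0)) as H.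
    rewrite mren_id in H. simpl in H.
    replace (map (mren (fun x => x)) ws) with ws in H by (rewrite (map_ext _ (fun x => x)); [symmetry; apply map_id|apply mren_id]).
    apply H.
    - intros x y Exy; exact Exy.
    - exists u, ws. split; [reflexivity|]. split.
      2:{ reflexivity. }
      intros j h pi1 Hj Hh HS.
      destruct HS as [th [pi' [-> [Hth Hpi']]]]. simpl in Hpi'. subst pi'. simpl.
      assert (Hv : Good u ws v (S j) h (App th (mren h (v (S j))))).
      { pose proof (Hth (S j) (fun x => x) [mren h (v (S j))] ltac:(lia) ltac:(intros p q E0; exact E0)) as H1.
        rewrite mren_id in H1. apply H1. simpl.
        exists (mren h (v (S j))), []. split; [reflexivity|]. split; [|reflexivity].
        intros j2 h2 pi2 Hj2 Hh2 HS2. simpl in HS2. subst pi2. rewrite mren_comp.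
        eexists; split; [constructor|]. apply cl_v. lia. }
      destruct Hv as [s' [R C]].
      eexists; split; [constructor|]. eapply cl_u; eauto. }
  destruct HG as [s' [R C]].
  destruct (extract u ws v 0 _ s' C) as [M HM].
  assert (HC : Ch u ws v 0 (mren (fun x => x) s')).
  { apply HM; auto. intros x y E0; exact E0. }
  rewrite mren_id in HC.
  apply (Ch_red u ws v 0 s' _ R) in HC.
  destruct (final u ws v 0 _ HC) as [[i [Hi _]] | [m [th [Hm [H1 [H2 H3]]]]]]; [lia|].
  exists m, th. split; [exact H1|]. split; [|exact H3].
  intros i Hi. apply H2. lia.
Qed.
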